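(* Let $S=S(k_0,\dots,k_{m-1},k_m)$ with $k_0\geq0$ and $k_i\geq1$ for $1\leq i\leq m$. Then: (i) if $S\neq\varepsilon$, $P_C(S)=S(k_0,\dots,k_{m-1},k_m-1)$ and $P_D(S)=S(k_0,\dots,k_{m-2},k_{m-1}-1)$; (ii) $N(S)=2^{|S|+1}+\sum_{i=1}^{m}(-1)^i\,2^{k_i+k_{i+1}+\cdots+k_m}-c$, where $c=2$ if $m$ is even and $c=1$ if $m$ is odd; that is, $N(S)=2^{k_0+\cdots+k_m+1}-2^{k_1+\cdots+k_m}+2^{k_2+\cdots+k_m}-\cdots+2^{k_m}-2$ if $m$ is even and $N(S)=2^{k_0+\cdots+k_m+1}-2^{k_1+\cdots+k_m}+2^{k_2+\cdots+k_m}-\cdots-2^{k_m}-1$ if $m$ is odd; (iii) $r(S)=2\left(1-2^{-k_0}+2^{-k_0-k_1}-\cdots+(-1)^m2^{-k_0-k_1-\cdots-k_{m-1}}+(-1)^{m+1}2^{-|S|-1}\right)$, and equivalently $r(S)=2\sum_{i=0}^{m+1}(-1)^i2^{-e_i}+(-1)^{m+2}2^{-|S|}$ where $e_i=\sum_{j=0}^{i-1}k_j$ (so $e_0=0$).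
   Context: $\{L,R\}^*$ is the free monoid on $L,R$ (strings), with empty string $\varepsilon$; $|S|$ is the number of symbols of $S$. For $k_0\geq 0$, $k_1,\dots,k_m\geq 1$, $S(k_0,\dots,k_m)$ is the string $R^{k_0}L^{k_1}R^{k_2}\cdots$ with $m+1$ alternating blocks (last block $R^{k_m}$ if $m$ even, $L^{k_m}$ if $m$ odd); every string has exactly one such representation, $\varepsilon=S(0)$; note $|S|=k_0+\cdots+k_m$. Blocks with exponent $0$ are omitted; by convention $S(-1)$ denotes the generalized string $R^{-1}$, and when $m=0$ the expression $S(k_0,\dots,k_{m-2},k_{m-1}-1)$ denotes $L^{-1}$. Parents: $P_L(S)=SR^{-1}$ and $P_R(S)=SL^{-1}$, evaluated recursively with the rules $LL^{-1}=\varepsilon$, $RR^{-1}=\varepsilon$, $LR^{-1}=R^{-1}$, $RL^{-1}=L^{-1}$ (and $\varepsilon R^{-1}=R^{-1}$, $\varepsilon L^{-1}=L^{-1}$). Position: $N\colon\{L,R\}^*\to\mathbb{N}$ is defined by $N(\varepsilon)=0$, $N(SL)=2N(S)+1$, $N(SR)=2N(S)+2$. For $S\neq\varepsilon$ with $n=N(S)$, the close parent is $P_C(S)=P_L(S)$ if $n$ is even and $P_R(S)$ if $n$ is odd; the distant parent is $P_D(S)=P_L(S)$ if $n$ is odd and $P_R(S)$ if $n$ is even. The function $r$ is defined by $r(\varepsilon)=1$, $r(SL)=r(S)-2^{-|SL|}$, $r(SR)=r(S)+2^{-|SR|}$. *)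

(* Defs.v *)
From mathcomp Require Import all_boot all_order all_algebra.
Set Implicit Arguments. Unset Strict Implicit. Unset Printing Implicit Defensive.
Import Order.TTheory GRing.Theory Num.Theory.

Inductive letter := L | R.

(* Generalized strings: ordinary strings, or the formal inverses R^{-1}, L^{-1}. *)
Inductive gstr := Str of seq letter | Rinv | Linv.

(* S(k_0,...,k_m) = R^{k_0} L^{k_1} R^{k_2} ...  (blocks with exponent 0 are empty) *)
Definition blk (i : nat) : letter := if odd i then L else R.
Definition mkS (k : seq nat) : seq letter :=
  flatten [seq nseq (nth 0 k i) (blk i) | i <- iota 0 (size k)].

(* S(k_0,...,k_{n-1},k_n - 1) with the paper's conventions:
   for the empty list (i.e. "m = 0" case of k_{m-1}-1) it denotes L^{-1},
   and S(-1) (the list [:: 0]) denotes R^{-1}. *)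
Definition Sdec (k : seq nat) : gstr :=
  match k with
  | [::] => Linv
  | [:: 0] => Rinv
  | _ => Str (mkS (rcons (take (size k).-1 k) ((last 0 k).-1)))
  end.

(* P_L(S) = S R^{-1}, computed with L L^{-1}=eps, R R^{-1}=eps, L R^{-1}=R^{-1},
   R L^{-1}=L^{-1}, eps R^{-1}=R^{-1}, eps L^{-1}=L^{-1}. *)
Fixpoint PL_rev (t : seq letter) : gstr :=
  match t with
  | [::] => Rinv
  | R :: t' => Str (rev t')
  | L :: t' => PL_rev t'
  end.
Fixpoint PR_rev (t : seq letter) : gstr :=
  match t with
  | [::] => Linv
  | L :: t' => Str (rev t')
  | R :: t' => PR_rev t'
  end.
Definition PL (s : seq letter) : gstr := PL_rev (rev s).
Definition PR (s : seq letter) : gstr := PR_rev (rev s).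

Definition N (s : seq letter) : nat :=
  foldl (fun n x => (n.*2 + (if x is L then 1 else 2))%N) 0%N s.

Definition PC (s : seq letter) : gstr := if odd (N s) then PR s else PL s.
Definition PD (s : seq letter) : gstr := if odd (N s) then PL s else PR s.

Local Open Scope ring_scope.
Fixpoint r_rev (t : seq letter) : rat :=
  match t with
  | [::] => 1
  | L :: t' => r_rev t' - (2%:Q) ^- (size t').+1
  | R :: t' => r_rev t' + (2%:Q) ^- (size t').+1
  end.
Definition r (s : seq letter) : rat := r_rev (rev s).

(* Main.v *)
Require Import Defs.
From mathcomp Require Import all_boot all_order all_algebra.
From mathcomp Require Import ring lra zify.
Import Order.TTheory GRing.Theory Num.Theory.
Local Open Scope ring_scope.

Lemma mkS_rcons k x : mkS (rcons k x) = mkS k ++ nseq x (blk (size k)).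
Proof.
rewrite /mkS size_rcons -addn1 iotaD map_cat flatten_cat /= nth_rcons ltnn eqxx cats0.
congr (_ ++ _); congr flatten; apply/eq_in_map => i; rewrite mem_iota add0n => /andP[_ H].
by rewrite nth_rcons H.
Qed.

Lemma size_mkS k : size (mkS k) = sumn k.
Proof.
elim/last_ind: k => [|k x IH] //; rewrite mkS_rcons size_cat size_nseq IH.
by rewrite -cats1 sumn_cat /= addn0.
Qed.

Lemma N_rcons s c : N (rcons s c) = ((N s).*2 + (if c is L then 1 else 2))%N.
Proof. by rewrite /N foldl_rcons. Qed.

Lemma N_nseq s x c : (N (s ++ nseq x c))%:Z =
  2%:Z ^+ x * (N s)%:Z + (2%:Z ^+ x - 1) * (if c is L then 1 else 2).
Proof.
elim: x s => [|x IH] s /=; first by rewrite cats0 expr0 mul1r subrr mul0r addr0.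
rewrite -cat_rcons IH N_rcons PoszD -muln2 PoszM exprS.
clear IH; case: c; rewrite /=; ring.
Qed.

Lemma r_rcons s c : r (rcons s c) = r s + (if c is L then -1 else 1) * (2%:Q) ^- (size s).+1.
Proof. by rewrite /r rev_rcons /= size_rev; case: c; rewrite ?mulN1r ?mul1r. Qed.

Lemma r_nseq s x c : r (s ++ nseq x c) =
  r s + (if c is L then -1 else 1) * ((2%:Q) ^- (size s) - (2%:Q) ^- (size s + x)).
Proof.
elim: x s => [|x IH] s /=; first by rewrite cats0 addn0 subrr mulr0 addr0.
rewrite -cat_rcons IH r_rcons size_rcons addSn -addnS exprS invfM.
set a := (2%:Q ^+ size s)^-1; set b := (2%:Q ^- (size s + x.+1)).
clear IH; case: c => /=; field; done.
Qed.
Lemma sumn_big k : sumn k = (\sum_(0 <= j < size k) nth 0 k j)%N.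
Proof.
elim/last_ind: k => [|k x IH]; first by rewrite big_geq.
rewrite size_rcons big_nat_recr //= nth_rcons ltnn eqxx -cats1 sumn_cat /= addn0 IH.
congr (_ + _)%N; apply: eq_big_nat => i /andP[_ Hi].
by rewrite nth_cat Hi.
Qed.

Lemma N_formula m k : size k = m.+1 ->
  (N (mkS k))%:Z = (2%:Z) ^+ (size (mkS k)).+1
     + \sum_(1 <= i < m.+1) (-1) ^+ i * (2%:Z) ^+ (\sum_(i <= j < m.+1) nth 0 k j)%N
     - (if odd m then 1 else 2).
Proof.
elim: m k => [|m IH] k.
  case: k => [|x [|]] //= _.
  rewrite big_geq // /mkS /= cats0 -(cat0s (nseq x R)) N_nseq size_cat size_nseq /=.
  have ->: N [::] = 0%N by []. rewrite exprS; ring.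
case/lastP: k => [|k' x] //; rewrite size_rcons => -[Hk].
rewrite mkS_rcons N_nseq (IH _ Hk) size_cat size_nseq Hk.
rewrite (@big_nat_recr _ _ _ m.+1 1) //= big_nat1 -cats1 nth_cat Hk ltnn subnn /=.
rewrite [in RHS](eq_big_nat _ _ (F2 := fun i => (-1) ^+ i * (2%:Z) ^+ (\sum_(i <= j < m.+1) nth 0 k' j)%N * 2%:Z ^+ x)); last first.
  move=> i /andP[_ Hi].
  have ->: (\sum_(i <= j < m.+2) nth 0 (k' ++ [:: x]) j = \sum_(i <= j < m.+1) nth 0 k' j + x)%N.
    rewrite big_nat_recr /=; last by lia.
    rewrite nth_cat Hk ltnn subnn /=; congr (_ + _)%N.
    by apply: eq_big_nat => j /andP[_ Hj]; rewrite nth_cat Hk Hj.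
  by rewrite exprD mulrA.
rewrite -big_distrl /=.
set A := \sum_(_ <= _ < _) _.
rewrite !exprS exprD -signr_odd /blk /=.
case: (odd m) => /=; ring.
Qed.

Lemma r_formula m k : size k = m.+1 ->
  r (mkS k) = 2%:Q * (\sum_(0 <= i < m.+1)
                    (-1) ^+ i * (2%:Q) ^- (\sum_(0 <= j < i) nth 0 k j)%N
                  + (-1) ^+ m.+1 * (2%:Q) ^- (size (mkS k)).+1).
Proof.
elim: m k => [|m IH] k.
  case: k => [|x [|]] //= _.
  rewrite big_nat1 big_geq // /mkS /= cats0 -(cat0s (nseq x R)) r_nseq size_cat size_nseq /=.
  rewrite add0n !expr0 invr1 expr1 exprS invfM.
  have ->: r [::] = 1 by [].
  set a := (2%:Q ^+ x)^-1; field; done.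
case/lastP: k => [|k' x] //; rewrite size_rcons => -[Hk].
rewrite mkS_rcons r_nseq (IH _ Hk) size_cat size_nseq Hk.
rewrite (@big_nat_recr _ _ _ m.+1 0) //= -cats1.
have ->: (\sum_(0 <= j < m.+1) nth 0 (k' ++ [:: x]) j = size (mkS k'))%N.
  rewrite size_mkS sumn_big Hk; apply: eq_big_nat => j /andP[_ Hj].
  by rewrite nth_cat Hk Hj.
rewrite [in RHS](eq_big_nat _ _ (F2 := fun i => (-1) ^+ i * (2%:Q) ^- (\sum_(0 <= j < i) nth 0 k' j)%N)); last first.
  move=> i /andP[_ Hi]; congr (_ * _ ^- _).
  by apply: eq_big_nat => j /andP[_ Hj]; rewrite nth_cat Hk; have ->: (j < m.+1)%N by lia.
set A := \sum_(_ <= _ < _) _.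
rewrite !exprS exprD !invfM -signr_odd /blk /=.
set a := (2%:Q ^+ size (mkS k'))^-1; set b := (2%:Q ^+ x)^-1.
case: (odd m) => /=; field; done.
Qed.
Definition Prem (c : letter) (s : seq letter) : gstr := if c is L then PR s else PL s.
Definition opp (c : letter) : letter := if c is L then R else L.

Lemma nseqSr (T : Type) y (c : T) : nseq y.+1 c = rcons (nseq y c) c.
Proof. by elim: y => //= y ->. Qed.

Lemma rev_nseq' (T : Type) x (c : T) : rev (nseq x c) = nseq x c.
Proof. by elim: x => //= x IH; rewrite rev_cons IH -nseqSr. Qed.

Lemma Prem_rcons c s : Prem c (rcons s c) = Str s.
Proof. by case: c; rewrite /Prem /PL /PR rev_rcons /= revK. Qed.

Lemma Prem_opp c s x : Prem c (s ++ nseq x (opp c)) = Prem c s.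
Proof.
rewrite /Prem /PL /PR rev_cat rev_nseq'.
by case: c => /=; elim: x => //=.
Qed.

Lemma N_odd s c : odd (N (rcons s c)) = (if c is L then true else false).
Proof. by rewrite N_rcons; case: c; rewrite /= ?addn1 ?addn2 /= odd_double. Qed.

Lemma PC_rcons s c : PC (rcons s c) = Prem c (rcons s c).
Proof. by rewrite /PC N_odd; case: c. Qed.

Lemma PD_rcons s c : PD (rcons s c) = Prem (opp c) (rcons s c).
Proof. by rewrite /PD N_odd; case: c. Qed.

Lemma Sdec_def s : s <> [::] -> s <> [:: 0%N] ->
  Sdec s = Str (mkS (rcons (take (size s).-1 s) (last 0%N s).-1)).
Proof. by case: s => [|a [|b l]] //; case: a. Qed.

Lemma Sdec_rcons k x : (0 < x)%N || (k != [::]) ->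
  Sdec (rcons k x) = Str (mkS (rcons k x.-1)).
Proof.
move=> H; rewrite Sdec_def.
- rewrite size_rcons /=.
  have ->: take (size k) (rcons k x) = k by rewrite -cats1 take_size_cat.
  by rewrite last_rcons.
- by case: k {H}.
- by case: k H => [|a [|b l]] //=; case: x.
Qed.

Lemma key j k z : size k = j -> (0 < z)%N || (j == 0)%N ->
  Prem (blk j) (mkS (rcons k z)) = Sdec (rcons k z).
Proof.
case: z => [|y] Hs H.
  have Hj : j = 0%N by case/orP: H => // /eqP.
  by move: Hs; rewrite Hj; case: k.
by rewrite mkS_rcons Hs nseqSr -rcons_cat Prem_rcons Sdec_rcons //= mkS_rcons Hs.
Qed.

Local Open Scope ring_scope.

Theorem theorem2 (m : nat) (k : seq nat)
  (Hsize : size k = m.+1)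
  (Hpos : forall i : nat, (1 <= i <= m)%N -> (0 < nth 0 k i)%N) :
  let S := mkS k in
  (* (i) *)
  (S <> [::] -> PC S = Sdec k /\ PD S = Sdec (take m k)) /\
  (* (ii) *)
  ((N S)%:Z = (2%:Z) ^+ (size S).+1
     + \sum_(1 <= i < m.+1) (-1) ^+ i * (2%:Z) ^+ (\sum_(i <= j < m.+1) nth 0 k j)%N
     - (if odd m then 1 else 2)) /\
  (* (iii) *)
  (r S = 2%:Q * (\sum_(0 <= i < m.+1)
                    (-1) ^+ i * (2%:Q) ^- (\sum_(0 <= j < i) nth 0 k j)%N
                  + (-1) ^+ m.+1 * (2%:Q) ^- (size S).+1)) /\
  (r S = 2%:Q * (\sum_(0 <= i < m.+2)
                    (-1) ^+ i * (2%:Q) ^- (\sum_(0 <= j < i) nth 0 k j)%N)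
         + (-1) ^+ m.+2 * (2%:Q) ^- (size S)).
Proof.
move=> S.
have Hr := @r_formula m k Hsize.
split; last split; last split.
- rewrite /S; clear Hr S.
  case/lastP: k Hsize Hpos => [|k' x] //; rewrite size_rcons => -[Hk] Hpos HS.
  have Hx : (0 < x)%N.
    case: m Hk Hpos HS => [|m'] Hk Hpos HS.
      by clear Hpos; case: k' Hk HS => // _; case: x.
    by have := Hpos m'.+1; rewrite nth_rcons Hk ltnn eqxx; apply; lia.
  case: x Hx Hpos HS => [|y] // _ Hpos HS.
  have E : mkS (rcons k' y.+1) = rcons (mkS k' ++ nseq y (blk m)) (blk m).
    by rewrite mkS_rcons Hk nseqSr rcons_cat.
  split.
    by rewrite {1}E PC_rcons -E key //= Hk.
  have ->: take m (rcons k' y.+1) = k' by rewrite -cats1 take_size_cat.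
  rewrite E PD_rcons rcons_cat -nseqSr.
  have Eb : blk m = opp (opp (blk m)) by case: (blk m).
  rewrite {2}Eb Prem_opp.
  case: m Hk Hpos {HS E Eb} => [|m'] Hk Hpos.
    by clear Hpos; case: k' Hk.
  case/lastP: k' Hk Hpos => [|k'' z] //; rewrite size_rcons => -[Hk] Hpos.
  have -> : opp (blk m'.+1) = blk m' by rewrite /blk /=; case: (odd m').
  apply: key => //.
  case: m' Hk Hpos => [|m''] Hk Hpos; first by rewrite orbT.
  have := Hpos m''.+1.
  rewrite nth_rcons size_rcons Hk ltnSn nth_rcons Hk ltnn eqxx => ->; lia.
- exact: (@N_formula m k Hsize).
- exact: Hr.
- rewrite /S Hr (@big_nat_recr _ _ _ m.+1 0) //=.
  have ->: (\sum_(0 <= j < m.+1) nth 0 k j = size (mkS k))%N by rewrite size_mkS sumn_big Hsize.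
  rewrite !exprS invfM; set a := (2%:Q ^+ size (mkS k))^-1.
  set A := \sum_(_ <= _ < _) _; field; done.
Qed.
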